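(* Let $G=G(n_1,n_2,p)$ where $1\ll n_1\leq n_2$. If $p=\frac{d}{\sqrt{n_1n_2}}$ for a constant $d<1$, then whp $G$ has no complex component.
   Context: $G(n_1,n_2,p)$ is the binomial random bipartite graph: each edge of $K_{n_1,n_2}$ is present independently with probability $p$. A component of a graph is complex if it contains more than one cycle. $1\ll n_1$ means $n_1\to\infty$; ''whp'' means with probability tending to $1$ as $n_1\to\infty$. *)

(* Defs.v *)
From HB Require Import structures.
From mathcomp Require Import all_boot all_order all_algebra.
From mathcomp Require Import all_classical all_reals all_analysis.
Set Implicit Arguments. Unset Strict Implicit. Unset Printing Implicit Defensive.
Import Order.TTheory GRing.Theory Num.Theory.

Local Open Scope ring_scope.

(* A spanning subgraph of K_{n1,n2} is given by its edge set
   E : {set 'I_n1 * 'I_n2}; the edge (i,j) joins vertex inl i (side 1)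
   to vertex inr j (side 2).  Vertex type: 'I_n1 + 'I_n2. *)
Definition bvert (n1 n2 : nat) : finType := ('I_n1 + 'I_n2)%type.

Definition badj (n1 n2 : nat) (E : {set 'I_n1 * 'I_n2}) : rel (bvert n1 n2) :=
  fun x y =>
    match x, y with
    | inl i, inr j => (i, j) \in E
    | inr j, inl i => (i, j) \in E
    | _, _ => false
    end.

Definition bdeg (n1 n2 : nat) (C : {set 'I_n1 * 'I_n2}) (x : bvert n1 n2) : nat :=
  #|[set y | badj C x y]|.

Definition incident (n1 n2 : nat) (C : {set 'I_n1 * 'I_n2}) (x : bvert n1 n2) : bool :=
  [exists y, badj C x y].

Definition is_cycle (n1 n2 : nat) (E C : {set 'I_n1 * 'I_n2}) : bool :=
  [&& C \subset E, C != finset.set0,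
      [forall x, incident C x ==> (bdeg C x == 2%N)] &
      [forall x, forall y, incident C x ==> incident C y ==> connect (badj C) x y]].

Definition in_component (n1 n2 : nat) (E C : {set 'I_n1 * 'I_n2})
    (v : bvert n1 n2) : bool :=
  [forall e, (e \in C) ==> connect (badj E) v (inl e.1)].

Definition has_complex_component (n1 n2 : nat) (E : {set 'I_n1 * 'I_n2}) : bool :=
  [exists v : bvert n1 n2, exists C1 : {set 'I_n1 * 'I_n2},
     exists C2 : {set 'I_n1 * 'I_n2},
     [&& C1 != C2, is_cycle E C1, is_cycle E C2,
         in_component E C1 v & in_component E C2 v]].

(* Probability, in G(n1,n2,p), of a property A of the edge set: each edge of
   K_{n1,n2} present independently with probability p. *)
Definition prob_Gnnp (R : realType) (n1 n2 : nat) (p : R)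
    (A : pred {set 'I_n1 * 'I_n2}) : R :=
  \sum_(E : {set 'I_n1 * 'I_n2} | A E)
     p ^+ #|E| * (1 - p) ^+ (n1 * n2 - #|E|)%N.

(* Main.v *)
Require Import Defs.
From HB Require Import structures.
From mathcomp Require Import all_boot all_order all_algebra.
From mathcomp Require Import all_classical all_reals all_analysis.
From mathcomp Require Import zify ring lra.
Import Order.TTheory GRing.Theory Num.Theory.
Import numFieldNormedType.Exports.
Set Implicit Arguments. Unset Strict Implicit. Unset Printing Implicit Defensive.

Section Basics.
Variables n1 n2 : nat.
Local Notation T := (bvert n1 n2).
Implicit Types (E C : {set 'I_n1 * 'I_n2}) (x y z : T).

Lemma badj_sym E : symmetric (badj E).
Proof. by move=> [i|j] [i'|j']. Qed.
Lemma badj_irr E x : badj E x x = false.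
Proof. by case: x. Qed.
Lemma badj_mono E E' x y : E \subset E' -> badj E x y -> badj E' x y.
Proof. move=> /fintype.subsetP S; case: x => [i|j]; case: y => [i'|j'] //= /S //. Qed.



End Basics.

Definition dadjI (m k l : nat) :=
  (l == k.+1) || (k == l.+1) || ((k == 0) && (l == m)) || ((k == m) && (l == 0)).
Definition Dadj (T : eqType) (s : seq T) u w :=
  (u \in s) && (w \in s) && dadjI (size s).-1 (index u s) (index w s).
Definition certA (T : eqType) (e : rel T) x0 r i j :=
  [&& 2 <= i <= size r, j.+2 <= size r, ~~ ((i == size r) && (j == 0)),
      e x0 (nth x0 (x0 :: r) i) & e (nth x0 (x0 :: r) (size r)) (nth x0 (x0 :: r) j)].
Definition certB (T : eqType) (e : rel T) x0 r k l :=
  [&& k < l <= size r, l != k.+1, ~~ ((k == 0) && (l == size r)),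
      e x0 (nth x0 (x0 :: r) (size r)) & e (nth x0 (x0 :: r) k) (nth x0 (x0 :: r) l)].

Definition hpath (T : eqType) (h : rel T) (s : seq T) :=
  if s is x :: r then path h x r && uniq s else false.

Lemma longest (T : finType) (h : rel T) : symmetric h -> irreflexive h ->
  (forall x y, h x y -> exists2 z, z != y & h x z) -> (exists x y, h x y) ->
  (exists x0 r, [/\ path h x0 r, uniq (x0 :: r) &
       exists i j, certA h x0 r i j \/ certB h x0 r i j])
  \/ (exists s, [/\ uniq s, 3 <= size s, cycle h s &
       forall u w, u \in s -> h u w -> Dadj s u w]).
Proof.
move=> hsym hirr hdeg [x [y hxy]].
pose P := fun n => [exists t : n.-tuple T, hpath h t].
have bnd : forall n, P n -> n <= #|T|.
  move=> n /existsP [t]; case: t => [[|a r] /= /eqP <-] //= /andP [_ U].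
  rewrite cardT -[(size r).+1]/(size (a :: r)).
  by apply: uniq_leq_size => // z _; rewrite mem_enum.
have xy : x != y by apply/eqP => E; rewrite E hirr in hxy.
have P2 : P 2 by apply/existsP; exists [tuple x; y]; rewrite /= hxy /= inE xy.
case: (ex_maxnP (ex_intro _ 2 P2) bnd) => M /existsP [t ht] maxM.
have maxs : forall s', hpath h s' -> size s' <= M.
  by move=> s' hs'; apply: maxM; apply/existsP; exists (in_tuple s').
have M2 : 2 <= M by apply: maxM.
case: t ht => [[|x0 r] /= /eqP sz] // /andP [pr ur].
set s := x0 :: r.
set m := size r.
have Mm : M = m.+1 by rewrite -sz.
subst M.
have m1 : 1 <= m by [].
have hps : forall s', hpath h s' -> size s' <= m.+1 by [].
have hx01 : h x0 (nth x0 s 1).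
  by move/pathP: pr => /(_ x0 0 m1).
have [z zn1 hz] := hdeg _ _ hx01.
have zs : z \in s.
  apply/negPn/negP => zns.
  suff : m.+2 <= m.+1 by rewrite ltnn.
  apply: (hps (z :: s)).
  by rewrite /= hsym hz pr zns ur.
have [i [si im]] : exists i, nth x0 s i = z /\ i <= m.
  by exists (index z s); rewrite nth_index // -ltnS index_mem.
have i0 : i != 0.
  apply/eqP => i0; move: hz; rewrite -si i0 /= hirr //.
have i1 : i != 1 by apply/eqP => i1; move: zn1; rewrite -si i1 eqxx.
have hlast : nth x0 s m = last x0 r by exact: (nth_last x0 s).
have hxm : h (nth x0 s m) (nth x0 s m.-1).
  have e1 : nth x0 s m = nth x0 r m.-1 by rewrite /s; case: (m) m1.
  rewrite hsym e1; move/(pathP x0): pr => /(_ m.-1); apply; clear -m1; rewrite /m in m1 *; lia.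
have [z' zn1' hz'] := hdeg _ _ hxm.
have zs' : z' \in s.
  apply/negPn/negP => zns.
  suff : m.+2 <= m.+1 by rewrite ltnn.
  have := hps (rcons s z'); rewrite size_rcons; apply.
  have U : uniq (rcons s z') by rewrite rcons_uniq zns; exact: ur.
  move: U; rewrite /s rcons_cons /= rcons_path pr -hlast hz' => ->//.
have [j [sj jm]] : exists j, nth x0 s j = z' /\ j <= m.
  by exists (index z' s); rewrite nth_index // -ltnS index_mem.
have jm0 : j != m.
  by apply/eqP => jm0; move: hz'; rewrite -sj jm0 hirr.
have jm1 : j != m.-1 by apply/eqP => jm1; move: zn1'; rewrite -sj jm1 eqxx.
have j2 : j.+2 <= m by clear -jm jm0 jm1 m1; lia.
have i2 : 2 <= i by clear -i0 i1; lia.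
case: (boolP ((i == m) && (j == 0))) => ij; last first.
  left; exists x0, r; split => //; exists i, j; left.
  by rewrite /certA i2 im j2 ij /= si hz sj.
case/andP: ij => /eqP im' /eqP j0.
have hx0m : h x0 (nth x0 s m) by rewrite -im' si.
have m2 : 2 <= m by rewrite -im'.
have cyc : cycle h s.
  by rewrite /s /= rcons_path pr -hlast hsym hx0m.
case: (boolP [exists u, exists w, (u \in s) && h u w && ~~ Dadj s u w]); last first.
  move=> /existsPn nex; right; exists s; split => //.
  move=> u w us huw; move: (nex u) => /existsPn /(_ w).
  by rewrite us huw /= negbK.
move=> /existsP [u /existsP [w /andP [/andP [us huw] nD]]].
case: (boolP (w \in s)) => ws; last first.
  set k := index u s.
  have ks : k < size s by rewrite index_mem.
  have rk : rot k s = u :: (drop k.+1 s ++ take k s).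
    by rewrite /rot (drop_nth x0 ks) nth_index.
  suff : m.+2 <= m.+1 by rewrite ltnn.
  have U : uniq (w :: rot k s).
    rewrite cons_uniq mem_rot ws rot_uniq; exact: ur.
  have Pa : path h w (rot k s).
    have := cyc; rewrite -(rot_cycle k) rk /= rcons_path => /andP [pp _].
    by rewrite hsym huw pp.
  have := hps (w :: rot k s); rewrite [size _]/= size_rot; apply.
  by rewrite /hpath Pa U.
left; exists x0, r; split => //.
have [k [sk km ik]] : exists k, [/\ nth x0 s k = u, k <= m & index u s = k].
  by exists (index u s); rewrite nth_index // -ltnS index_mem.
have [l [sl lm il]] : exists l, [/\ nth x0 s l = w, l <= m & index w s = l].
  by exists (index w s); rewrite nth_index // -ltnS index_mem.
have nD' : ~~ dadjI m k l by move: nD; rewrite /Dadj us ws ik il.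
have kl : k != l by apply/eqP => kl; move: huw; rewrite -sk -sl kl hirr.
rewrite /dadjI in nD'.
case: (ltngtP k l) => [klt | kgt | keq].
- exists k, l; right; rewrite /certB hx0m -/s sk sl huw !andbT.
  by clear -nD' klt lm; rewrite /m in lm nD'; clear -klt lm nD'; move: (size r) lm nD' => M' lm nD'; apply/and3P; split; lia.
- exists l, k; right; rewrite /certB hx0m -/s sk sl hsym huw !andbT.
  by clear -nD' kgt km; rewrite /m in km nD'; clear -kgt km nD'; move: (size r) km nD' => M' km nD'; apply/and3P; split; lia.
- by rewrite keq eqxx in kl.
Qed.

Lemma deg2_sub (T : finType) (S : {set T}) a b :
  #|S| = 2 -> S \subset [set a; b] -> a \in S /\ b \in S.
Proof.
move=> cS sub.
have := subset_leqif_cards sub; rewrite cS cards2 => [[le eqv]].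
have ab : a != b by case: (a != b) le.
move: eqv; rewrite ab eqxx => /esym /eqP ->.
by rewrite !inE !eqxx orbT.
Qed.

Section Cyc.
Variables n1 n2 : nat.
Local Notation T := (bvert n1 n2).

Lemma cycle_full (E C : {set 'I_n1 * 'I_n2}) (s : seq T) :
  is_cycle E C -> uniq s -> 3 <= size s ->
  (forall u w, badj C u w -> Dadj s u w) ->
  forall u w, Dadj s u w -> badj C u w.
Proof.
case/and4P => _ Cne /forallP Cdeg _ us s3 sub.
case: s us s3 sub => [|x0 r] // us s3 sub.
set s := x0 :: r.
set m := size r.
have m2 : 2 <= m by [].
pose nx k := if k == m then 0 else k.+1.
pose pv k := if k == 0 then m else k.-1.
have nxm : forall k, k <= m -> nx k <= m by move=> k; rewrite /nx; case: eqP => //; lia.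
have A : forall k w, k <= m -> Dadj s (nth x0 s k) w ->
    w = nth x0 s (nx k) \/ w = nth x0 s (pv k).
  move=> k w km /andP [/andP [_ ws]].
  rewrite index_uniq // ?ltnS //.
  have lm : index w s <= m by rewrite -ltnS index_mem.
  rewrite -{2 3}(nth_index x0 ws).
  move: (index w s) lm => l lm.
  move=> D.
  suff : (l == nx k) || (l == pv k) by case/orP => /eqP ->; [left|right].
  move: D; rewrite /dadjI /nx /pv.
  have -> : (size s).-1 = m by [].
  move: (m) m2 km lm => M m2 km lm D.
  case: ifP => /eqP ?; case: ifP => /eqP ?; lia.
have Cf : forall k, k <= m -> incident C (nth x0 s k) ->
    badj C (nth x0 s k) (nth x0 s (nx k)) /\ badj C (nth x0 s k) (nth x0 s (pv k)).
  move=> k km ik.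
  have /eqP := implyP (Cdeg (nth x0 s k)) ik; rewrite /bdeg => c2.
  have := @deg2_sub _ _ (nth x0 s (nx k)) (nth x0 s (pv k)) c2; rewrite !inE; apply.
  apply/fintype.subsetP => y; rewrite !inE => /sub /(A _ _ km) [->|->];
    by rewrite eqxx ?orbT.
have Df : forall k, k <= m -> incident C (nth x0 s k) -> incident C (nth x0 s (nx k)).
  move=> k km ik; have [h1 _] := Cf k km ik.
  by apply/existsP; exists (nth x0 s k); rewrite badj_sym.
have [k0 [k0m ik0]] : exists k0, k0 <= m /\ incident C (nth x0 s k0).
  case/set0Pn: Cne => [[i j] eC].
  have bij : badj C (inl i) (inr j) by [].
  have /andP [/andP [ins _] _] := sub _ _ bij.
  exists (index (inl i : T) s); rewrite -ltnS index_mem nth_index //; split => //.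
  by apply/existsP; exists (inr j).
have up : forall t k, k + t <= m -> incident C (nth x0 s k) -> incident C (nth x0 s (k + t)).
  elim => [|t IH] k ktm ik; first by rewrite addn0.
  have := Df (k + t) ltac:(lia) (IH k ltac:(lia) ik).
  by rewrite /nx; case: eqP => [?|_]; [lia | rewrite addnS].
have im : incident C (nth x0 s m).
  by have := up (m - k0) k0 ltac:(lia) ik0; rewrite subnKC.
have i0 : incident C (nth x0 s 0).
  by have := Df m (leqnn m) im; rewrite /nx eqxx.
have iall : forall k, k <= m -> incident C (nth x0 s k).
  by move=> k km; have := up k 0 km i0.
move=> u w D.
have us' : u \in s by case/andP: D => /andP [].
have km : index u s <= m by rewrite -ltnS index_mem.
move: D; rewrite -(nth_index x0 us') => D.
have [h1 h2] := Cf _ km (iall _ km).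
by case: (A _ _ km D) => ->.
Qed.
End Cyc.

Lemma certA_mono (T : eqType) (e e' : rel T) x0 r i j :
  (forall x y, e x y -> e' x y) -> certA e x0 r i j -> certA e' x0 r i j.
Proof. by move=> ee /and5P [a b c d f]; rewrite /certA a b c !ee. Qed.
Lemma certB_mono (T : eqType) (e e' : rel T) x0 r i j :
  (forall x y, e x y -> e' x y) -> certB e x0 r i j -> certB e' x0 r i j.
Proof. by move=> ee /and5P [a b c d f]; rewrite /certB a b c !ee. Qed.

Section Main.
Variables n1 n2 : nat.
Local Notation T := (bvert n1 n2).

Lemma cyc2 (E C : {set 'I_n1 * 'I_n2}) x : is_cycle E C -> incident C x ->
  exists z1 z2, [/\ z1 != z2, badj C x z1 & badj C x z2].
Proof.
case/and4P => _ _ /forallP Cdeg _ ix.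
have /cards2P [z1 [z2 [z12 eS]]] := implyP (Cdeg x) ix.
exists z1, z2; split => //.
- have : z1 \in [set y | badj C x y] by rewrite eS !inE eqxx.
  by rewrite inE.
- have : z2 \in [set y | badj C x y] by rewrite eS !inE eqxx orbT.
  by rewrite inE.
Qed.

Lemma complex_path (E : {set 'I_n1 * 'I_n2}) : has_complex_component E ->
  exists x0 r, [/\ path (badj E) x0 r, uniq (x0 :: r) &
     exists i j, certA (badj E) x0 r i j \/ certB (badj E) x0 r i j].
Proof.
case/existsP => v /existsP [C1 /existsP [C2 /and5P [neq cy1 cy2 ic1 ic2]]].
have cy1' := cy1; have cy2' := cy2.
case/and4P: cy1' => C1E C1ne _ C1con.
case/and4P: cy2' => C2E C2ne _ C2con.
case/set0Pn: C1ne => [[i1 j1] e1C].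
case/set0Pn: C2ne => [[i2 j2] e2C].
set a : T := inl i1.
set b : T := inl i2.
have ia : incident C1 a by apply/existsP; exists (inr j1).
have ib : incident C2 b by apply/existsP; exists (inr j2).
have csym := sym_connect_sym (@badj_sym n1 n2 E).
have cab : connect (badj E) a b.
  have va : connect (badj E) v a by exact: (implyP ((forallP ic1) (i1, j1)) e1C).
  have vb : connect (badj E) v b by exact: (implyP ((forallP ic2) (i2, j2)) e2C).
  by apply: connect_trans vb; rewrite csym.
case/connectP: cab => p pth eb.
move: eb; case: (shortenP pth) => q pq uq _ eb.
pose qv t := nth a (a :: q) t.
pose qadj (x y : T) := [exists t : 'I_(size q),
   ((qv t == x) && (qv t.+1 == y)) || ((qv t == y) && (qv t.+1 == x))].
pose h (x y : T) := [|| badj C1 x y, badj C2 x y | qadj x y].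
have qsym : symmetric qadj.
  move=> x y; apply/existsP/existsP => [] [t Ht]; exists t; by rewrite orbC.
have hsym : symmetric h by move=> x y; rewrite /h qsym !(badj_sym _ x).
have hE : forall x y, h x y -> badj E x y.
  move=> x y /or3P [|| /existsP [t]].
  - exact: badj_mono C1E.
  - exact: badj_mono C2E.
  have qt : badj E (qv t) (qv t.+1) by move/(pathP a): pq => /(_ t (ltn_ord t)).
  by case/orP => /andP [/eqP <- /eqP <-] //; rewrite badj_sym.
have hirr : irreflexive h by move=> x; apply/negP => /hE; rewrite badj_irr.
have qstep : forall t, t < size q -> qadj (qv t) (qv t.+1).
  by move=> t tq; apply/existsP; exists (Ordinal tq); rewrite !eqxx.
have qlast : qv (size q) = b by rewrite eb; exact: (nth_last a (a :: q)).
have q0 : qv 0 = a by [].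
have two : forall x y, h x y -> exists z1 z2, [/\ z1 != z2, h x z1 & h x z2].
  move=> x y /or3P [|| /existsP [t Ht]].
  - move=> bxy; have [|z1 [z2 [z12 h1 h2]]] := cyc2 cy1 (x := x).
      by apply/existsP; exists y.
    by exists z1, z2; rewrite /h h1 h2.
  - move=> bxy; have [|z1 [z2 [z12 h1 h2]]] := cyc2 cy2 (x := x).
      by apply/existsP; exists y.
    by exists z1, z2; rewrite /h h1 h2 !orbT.
  have [t' [t'q xt']] : exists t', t' <= size q /\ x = qv t'.
    case/orP: Ht => /andP [/eqP e1' /eqP e2'].
    + by exists t; split; [exact: ltnW | rewrite e1'].
    + by exists t.+1; split; [exact: ltn_ord | rewrite e2'].
  case: (posnP t') => [t0|tpos].
    have [|z1 [z2 [z12 h1 h2]]] := cyc2 cy1 (x := x); first by rewrite xt' t0.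
    by exists z1, z2; rewrite /h h1 h2.
  case: (eqVneq t' (size q)) => [tl|tl].
    have [|z1 [z2 [z12 h1 h2]]] := cyc2 cy2 (x := x); first by rewrite xt' tl qlast.
    by exists z1, z2; rewrite /h h1 h2 !orbT.
  exists (qv t'.-1), (qv t'.+1); split.
  - rewrite /qv nth_uniq //=; first by move: tpos; clear; lia.
    + by move: t'q tpos; move: (size q) => L; clear; lia.
    + by move: t'q tl; move: (size q) => L; clear; lia.
  - have := qstep t'.-1 ltac:(move: t'q tpos; move: (size q) => L; clear; lia).
    by rewrite prednK // => H; rewrite /h xt' qsym H !orbT.
  - rewrite /h xt' qstep ?orbT //.
    by move: t'q tl; move: (size q) => L; clear; lia.
have hdeg : forall x y, h x y -> exists2 z, z != y & h x z.
  move=> x y hxy; have [z1 [z2 [z12 h1 h2]]] := two x y hxy.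
  case: (eqVneq z1 y) => [ey|ny]; last by exists z1.
  by exists z2; rewrite // -ey eq_sym.
have hedge : exists x y, h x y by exists a, (inr j1); apply/orP; left; exact: e1C.
have hcsym := sym_connect_sym hsym.
have qpath : forall t, t <= size q -> connect h a (qv t).
  elim => [|t IH] tq; first exact: connect0.
  apply: connect_trans (IH (ltnW tq)) _; apply: connect1.
  by rewrite /h qstep ?orbT.
have cab : connect h a b by rewrite -qlast qpath.
have conn_a : forall x y, h x y -> connect h a x.
  move=> x y /or3P [|| /existsP [t Ht]].
  - move=> bxy; apply: (connect_sub (e := badj C1)).
      by move=> u w buw; apply: connect1; rewrite /h buw.
    rewrite (implyP (implyP ((forallP ((forallP C1con) a)) x) ia)) //.
    by apply/existsP; exists y.
  - move=> bxy; apply: connect_trans cab _; apply: (connect_sub (e := badj C2)).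
      by move=> u w buw; apply: connect1; rewrite /h buw orbT.
    rewrite (implyP (implyP ((forallP ((forallP C2con) b)) x) ib)) //.
    by apply/existsP; exists y.
  case/orP: Ht => /andP [/eqP e1' /eqP e2'].
  + by rewrite -e1' qpath // ltnW.
  + by rewrite -e2' qpath.
have hconn : forall x y x' y', h x x' -> h y y' -> connect h x y.
  move=> x y x' y' hx hy; apply: connect_trans (conn_a _ _ hy).
  by rewrite hcsym (conn_a _ _ hx).
case: (longest hsym hirr hdeg hedge).
  move=> [x0 [r [pr ur [i [j cij]]]]]; exists x0, r; split => //.
  - exact: (@sub_path _ h (badj E) hE x0 r pr).
  exists i, j; case: cij => [cA|cB]; [left; exact: certA_mono hE cA
                                     | right; exact: certB_mono hE cB].
move=> [s [us s3 cs sD]].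
have [x0 [y0 hx0]] : exists x0 y0, (x0 \in s) && h x0 y0.
  case: s us s3 cs sD => [|x0 [|y0 r]] //= _ _ /andP [hxy _] _.
  by exists x0, y0; rewrite inE eqxx hxy.
case/andP: hx0 => x0s hx0.
have cl : fingraph.closed h (fun x => x \in s).
  move=> x y hxy; apply/idP/idP => [xs|ys].
  - by case/andP: (sD _ _ xs hxy) => /andP [].
  - by rewrite hsym in hxy; case/andP: (sD _ _ ys hxy) => /andP [].
have allD : forall u w, h u w -> Dadj s u w.
  move=> u w huw.
  have us' : u \in s by rewrite -(closed_connect cl (hconn _ _ _ _ hx0 huw)).
  exact: (sD _ _ us' huw).
have C1sub : forall u w, badj C1 u w -> Dadj s u w.
  by move=> u w buw; apply: allD; rewrite /h buw.
have C2sub : forall u w, badj C2 u w -> Dadj s u w.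
  by move=> u w buw; apply: allD; rewrite /h buw orbT.
have f1 := cycle_full cy1 us s3 C1sub.
have f2 := cycle_full cy2 us s3 C2sub.
have E12 : C1 = C2.
  apply/setP => -[i j].
  apply/idP/idP => H.
  - have : badj C2 (inl i) (inr j) by apply: f2; apply: C1sub; exact: H.
    by [].
  - have : badj C1 (inl i) (inr j) by apply: f1; apply: C2sub; exact: H.
    by [].
by rewrite E12 eqxx in neq.
Qed.
End Main.

Definition sl (m : nat) (tag : bool) (i j : nat) (t : nat) : nat * nat :=
  if t < m then (t, t.+1) else if t == m then (if tag then (0, i) else (0, m))
  else (if tag then (m, j) else (i, j)).

Definition certI (m : nat) (tag : bool) (i j : nat) :=
  if tag then [&& 2 <= i <= m, j.+2 <= m & ~~ ((i == m) && (j == 0))]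
  else [&& i < j <= m, j != i.+1 & ~~ ((i == 0) && (j == m))].

Lemma sl_bnd m tag i j t : certI m tag i j -> t < m.+2 ->
  ((sl m tag i j t).1 <= m) && ((sl m tag i j t).2 <= m).
Proof.
rewrite /certI /sl; case: tag => /and3P [h1 h2 h3] ht;
 case: ifP => ?; try case: ifP => ?; apply/andP; split => /=; lia.
Qed.

Lemma sl_inj m tag i j t t' : certI m tag i j -> t < m.+2 -> t' < m.+2 ->
  let p := sl m tag i j t in let p' := sl m tag i j t' in
  (p.1 = p'.1 /\ p.2 = p'.2) \/ (p.1 = p'.2 /\ p.2 = p'.1) -> t = t'.
Proof.
move=> C ht ht' /=; move: C; rewrite /certI /sl; case: tag => /and3P [h1 h2 h3];
 do ! case: ifP => ?; move=> /= [[? ?]|[? ?]]; lia.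
Qed.

Definition a1 (m : nat) (b : bool) := if b then (m.+2)./2 else (m.+1)./2.
Definition a2 (m : nat) (b : bool) := if b then (m.+1)./2 else (m.+2)./2.

Section Cert.
Variables (n1 n2 : nat) (i0 : 'I_n1) (j0 : 'I_n2).
Local Notation T := (bvert n1 n2).

Definition vx (b : bool) (t1 : seq 'I_n1) (t2 : seq 'I_n2) (k : nat) : T :=
  if b == ~~ odd k then inl (nth i0 t1 k./2) else inr (nth j0 t2 k./2).
Definition ed (x y : T) : option ('I_n1 * 'I_n2) :=
  match x, y with inl i, inr j => Some (i, j) | inr j, inl i => Some (i, j) | _, _ => None end.
Definition CT m b :=
  ((a1 m b).-tuple 'I_n1 * (a2 m b).-tuple 'I_n2 * (bool * ('I_m.+1 * 'I_m.+1)))%type.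
Definition slv m b (c : CT m b) t :=
  let p := sl m c.2.1 c.2.2.1 c.2.2.2 t in
  ed (vx b c.1.1 c.1.2 p.1) (vx b c.1.1 c.1.2 p.2).
Definition FsetC m b (c : CT m b) : {set 'I_n1 * 'I_n2} :=
  [set e | [exists t : 'I_m.+2, slv c t == Some e]].

Lemma edE (E : {set 'I_n1 * 'I_n2}) x y : badj E x y -> exists2 e, ed x y = Some e & e \in E.
Proof. by case: x => a; case: y => b' //= H; eexists. Qed.

Lemma ed_inj x y x' y' e : ed x y = Some e -> ed x' y' = Some e ->
  (x = x' /\ y = y') \/ (x = y' /\ y = x').
Proof.
case: x => a; case: y => b' //=; case: x' => c; case: y' => d //= [<-] [-> ->]; auto.
Qed.

Definition isl (x : T) := if x is inl _ then true else false.
Definition getl (x : T) := if x is inl i then i else i0.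
Definition getr (x : T) := if x is inr j then j else j0.

Lemma badj_side (E : {set 'I_n1 * 'I_n2}) x y : badj E x y -> isl y = ~~ isl x.
Proof. by case: x => ?; case: y. Qed.

Lemma half_bnd k m (o : bool) : odd k = o -> k <= m ->
  k./2 < (if o then (m.+1)./2 else (m.+2)./2).
Proof.
move=> ok km; have := odd_double_half k; rewrite ok -muln2 -!divn2.
by case: o ok => _ /= hk; lia.
Qed.

Lemma cert_exists (E : {set 'I_n1 * 'I_n2}) : has_complex_component E ->
  exists (m : 'I_(n1 + n2)) (b : bool) (c : CT m b),
    (FsetC c \subset E) && (m.+2 <= #|FsetC c|).
Proof.
case/complex_path => x0 [r [pr ur [i [j cij]]]].
set s := x0 :: r.
set m := size r.
have mlt : m < n1 + n2.
  have : size s <= #|T|.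
    rewrite cardT; apply: (uniq_leq_size (ur : uniq s)).
    by move=> z _; rewrite mem_enum.
  by rewrite card_sum !card_ord.
have [tag [Ci [pA pB]]] : exists tag, certI m tag i j /\
    badj E x0 (nth x0 s (if tag then i else m)) /\
    badj E (nth x0 s (if tag then m else i)) (nth x0 s j).
  case: cij => [/and5P [c1 c2 c3 c4 c5] | /and5P [c1 c2 c3 c4 c5]].
  - by exists true; rewrite /certI c1 c2 c3.
  - by exists false; rewrite /certI c1 c2 c3.
have sbadj : forall t, t < m.+2 ->
    badj E (nth x0 s (sl m tag i j t).1) (nth x0 s (sl m tag i j t).2).
  move=> t tm; rewrite /sl; case: ifP => tlt.
    by move/(pathP x0): pr => /(_ t tlt).
  case: ifP => /eqP tm'; case: (tag) pA pB => /= pA pB //.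
set b := isl x0.
have alt : forall k, k <= m -> isl (nth x0 s k) = (b == ~~ odd k).
  elim => [|k IH] km; first by rewrite /= eqb_id.
  have e : badj E (nth x0 s k) (nth x0 s k.+1).
    by move/(pathP x0): pr => /(_ k km).
  rewrite (badj_side e) IH ?(ltnW km) //= .
  by case: (b); case: (odd k).
pose L1 := [seq getl (nth x0 s (~~ b + k.*2)) | k <- iota 0 (a1 m b)].
have sz1 : size L1 == a1 m b by rewrite size_map size_iota.
pose t1 : (a1 m b).-tuple 'I_n1 := Tuple sz1.
pose L2 := [seq getr (nth x0 s (b + k.*2)) | k <- iota 0 (a2 m b)].
have sz2 : size L2 == a2 m b by rewrite size_map size_iota.
pose t2 : (a2 m b).-tuple 'I_n2 := Tuple sz2.
have vxs : forall k, k <= m -> vx b t1 t2 k = nth x0 s k.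
  move=> k km; rewrite /vx; have hk := odd_double_half k.
  have ak := alt k km.
  case: ifP => side.
  - have ob : odd k = ~~ b by move/eqP: side => ->; rewrite negbK.
    have kb : k./2 < a1 m b.
      by have := half_bnd ob km; rewrite /a1; case: (b).
    rewrite /= (nth_map 0) ?size_iota // nth_iota // add0n -ob hk.
    by move: ak; rewrite side; case: (nth x0 s k).
  - have ob : odd k = b.
      by move/negbT: side; case: (b); case: (odd k).
    have kb : k./2 < a2 m b.
      by have := half_bnd ob km; rewrite /a2; case: (b).
    rewrite /= (nth_map 0) ?size_iota // nth_iota // add0n -ob hk.
    by move: ak; rewrite side; case: (nth x0 s k).
have [im jm] : i < m.+1 /\ j < m.+1.
  by move: Ci; rewrite /certI; case: (tag) => /and3P [c1 c2 c3]; split; lia.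
pose c : CT m b := (t1, t2, (tag, (Ordinal im, Ordinal jm))).
exists (Ordinal mlt), b, c => /=.
have slvE : forall t : 'I_m.+2,
    slv c t = ed (nth x0 s (sl m tag i j t).1) (nth x0 s (sl m tag i j t).2).
  by move=> t; have /andP [h1 h2] := sl_bnd Ci (ltn_ord t); rewrite /slv /= !vxs.
have some : forall t : 'I_m.+2, exists2 e, slv c t = Some e & e \in E.
  by move=> t; rewrite slvE; apply: edE; apply: sbadj.
apply/andP; split.
  apply/fintype.subsetP => e; rewrite inE => /existsP [t /eqP st].
  by have [e' s' e'E] := some t; rewrite st in s'; case: s' => ->.
pose g (t : 'I_m.+2) := odflt (i0, j0) (slv c t).
have gE : forall t : 'I_m.+2, slv c t = Some (g t) by move=> t; rewrite /g; have [e -> _] := some t.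
have nthI : forall a a', a <= m -> a' <= m -> nth x0 s a = nth x0 s a' -> a = a'.
  move=> a a' am a'm e; apply/eqP; rewrite -(nth_uniq x0 _ _ (ur : uniq s)) ?ltnS //.
  by rewrite e.
have ginj : injective g.
  move=> t t' gt; apply/val_inj/(sl_inj Ci (ltn_ord t) (ltn_ord t')) => /=.
  have H1 := gE t; have H2 := gE t'; rewrite gt slvE in H1; rewrite slvE in H2.
  have /andP [b1 b2] := sl_bnd Ci (ltn_ord t).
  have /andP [b3 b4] := sl_bnd Ci (ltn_ord t').
  case: (ed_inj H1 H2) => [[e1 e2]|[e1 e2]]; [left|right]; split; exact: nthI.
rewrite -{1}[m.+2](card_ord m.+2) -cardsT -(card_imset _ ginj).
apply: subset_leq_card; apply/fintype.subsetP => e /imsetP [t _ ->].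
by rewrite inE; apply/existsP; exists t; rewrite gE.
Qed.
End Cert.

Local Open Scope ring_scope.

Lemma prob_sup (R : realType) (T : finType) (p : R) (F : {set T}) :
  \sum_(E : {set T} | F \subset E) p ^+ #|E| * (1 - p) ^+ (#|T| - #|E|)%N = p ^+ #|F|.
Proof.
pose G (x : T) (b : bool) : R := if b then p else (if x \in F then 0 else 1 - p).
have L : \prod_(x : T) \sum_(b : bool) G x b = p ^+ #|F|.
  rewrite (eq_bigr (fun x => if x \in F then p else 1)); last first.
    move=> x _; rewrite big_bool /G /=; case: (x \in F); rewrite ?addr0 //.
    by rewrite addrC subrK.
  by rewrite -big_mkcond /= prodr_const.
rewrite -L bigA_distr_bigA /=.
rewrite (reindex (fun E : {set T} => [ffun x => x \in E])) /=; last first.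
  exists (fun f : {ffun T -> bool} => [set x | f x]) => [E _ | f _].
  - by apply/setP => x; rewrite inE ffunE.
  - by apply/ffunP => x; rewrite !ffunE inE.
rewrite big_mkcond /=; apply: eq_bigr => E _.
under eq_bigr do rewrite ffunE.
case: ifP => FE.
- rewrite (bigID (fun x => x \in E)) /=.
  have -> : \prod_(x | x \in E) G x (x \in E) = p ^+ #|E|.
    by rewrite -prodr_const; apply: eq_bigr => x ->.
  have -> : \prod_(x | x \notin E) G x (x \in E) = (1 - p) ^+ #|[predC E]|.
    rewrite -prodr_const; apply: eq_bigr => x xE; rewrite /G (negbTE xE).
    by case: ifP => // xF; move/fintype.subsetP: FE => /(_ x xF); rewrite (negbTE xE).
  by rewrite -(cardC E) addKn.
- have /subsetPn [x xF xE] : ~~ (F \subset E) by rewrite FE.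
  rewrite (bigD1 x) //= /G (negbTE xE) xF mul0r //.
Qed.

Local Open Scope ring_scope.

Section SumBound.
Variables (R : realType) (d : R).
Hypotheses (d0 : 0 <= d) (d1 : d < 1).

Let al := (1 - d)^-1.
Let be := 2 * al * d / (1 - d).
Let ga := (al + be) * d / (1 - d).
Let g (N : nat) : R := al * (N.+1%:R) ^+ 2 + be * N.+1%:R + ga.

Lemma g_step N : g N - d * g N.+1 = (N.+1%:R) ^+ 2.
Proof.
have hd : 1 - d != 0 by rewrite subr_eq0 eq_sym lt_eqF.
rewrite /g /ga /be /al -[N.+2%:R]natr1.
set u := N.+1%:R.
by field.
Qed.

Lemma g_ge0 N : 0 <= g N.
Proof.
have hd : 0 < 1 - d by rewrite subr_gt0.
have al0 : 0 <= al by rewrite /al invr_ge0 ltW.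
have be0 : 0 <= be by rewrite /be !mulr_ge0 // ?invr_ge0 ?ltW.
have ga0 : 0 <= ga by rewrite /ga !mulr_ge0 // ?addr_ge0 // ?invr_ge0 ?ltW.
by rewrite /g !addr_ge0 // mulr_ge0.
Qed.

Lemma sum_poly_geo N :
  \sum_(m < N) (m.+1%:R) ^+ 2 * d ^+ m <= g 0.
Proof.
suff E : \sum_(m < N) (m.+1%:R) ^+ 2 * d ^+ m + d ^+ N * g N = g 0.
  by rewrite -E lerDl mulr_ge0 ?exprn_ge0 ?g_ge0.
elim: N => [|N IH]; first by rewrite big_ord0 add0r expr0 mul1r.
rewrite big_ord_recr /= -IH -g_step.
set S := \sum_(i < N) _.
rewrite exprSr; ring.
Qed.

End SumBound.

Local Open Scope ring_scope.

Lemma half_facts (m : nat) :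
  if odd m then ((m.+2)./2 = (m.+1)./2 /\ m.+2 = ((m.+1)./2).*2 + 1)%N
  else ((m.+2)./2 = ((m.+1)./2).+1 /\ m.+2 = ((m.+1)./2).*2 + 2)%N.
Proof.
have hm := odd_double_half m.
case: (odd m) hm => /= hm; rewrite -!divn2 -!muln2 in hm *; split; lia.
Qed.

Lemma nat_bound (n1 n2 m : nat) (b : bool) : (n1 <= n2)%N ->
  (n1 ^ a1 m b * n2 ^ a2 m b <= (n1 * n2) ^ ((m.+1)./2) * (if odd m then 1 else n2))%N.
Proof.
move=> n12; have := half_facts m; rewrite /a1 /a2.
case: (odd m) => -[e1 _]; rewrite e1 ?muln1 ?expnMn //.
- by case: b.
- move: (m.+1./2) => r; case: b; rewrite expnS; move: (n1 ^ r)%N (n2 ^ r)%N => A B.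
  + by rewrite -mulnA [(A * B * n2)%N]mulnC; exact: leq_mul n12 (leqnn _).
  + by rewrite (mulnC n2 B) mulnA.
Qed.

Lemma term_bound (R : realType) (n1 n2 m : nat) (b : bool) (d : R) :
  (0 < n1)%N -> (n1 <= n2)%N -> 0 <= d ->
  (d / Num.sqrt ((n1 * n2)%:R)) ^+ m.+2 * ((n1 ^ a1 m b * n2 ^ a2 m b)%:R)
    <= d ^+ m.+2 / n1%:R.
Proof.
move=> n1p n12 d0.
set x : R := n1%:R; set y : R := n2%:R.
have x0 : 0 < x by rewrite ltr0n.
have xy : x <= y by rewrite ler_nat.
have y0 : 0 < y by apply: lt_le_trans xy.
rewrite natrM -/x -/y.
set s := Num.sqrt (x * y).
have s2 : s ^+ 2 = x * y by rewrite sqr_sqrtr // mulr_ge0 // ltW.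
have sx : x <= s.
  rewrite -(ger0_norm (ltW x0)) -sqrtr_sqr (ler_sqrt _ (mulr_ge0 (ltW x0) (ltW y0))).
  by rewrite expr2 (ler_pM2l x0).
have s0 : 0 < s by apply: lt_le_trans sx.
set p := d / s.
have p0 : 0 <= p by rewrite divr_ge0 // ltW.
have pp2 : p ^+ 2 * (x * y) = d ^+ 2.
  by rewrite -s2 /p expr_div_n divfK // expf_neq0 // gt_eqF.
have pdx : p <= d / x by rewrite ler_wpM2l // lef_pV2 ?posrE.
have hf := half_facts m.
have nb := nat_bound m b n12.
set r := (m.+1)./2 in nb *.
have nbR : ((n1 ^ a1 m b * n2 ^ a2 m b)%:R : R) <=
    (x * y) ^+ r * (if odd m then 1 else y).
  move: nb; rewrite -(ler_nat R) !(natrX, natrM) -/x -/y.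
  by case: (odd m); rewrite ?mulr1n.
apply: le_trans; first exact: (ler_wpM2l (exprn_ge0 _ p0) nbR).
move: hf; rewrite -/r; case: (odd m) => -[_ ->]; rewrite exprD -mul2n exprM.
- rewrite [X in X <= _](_ : _ = (p ^+ 2 * (x * y)) ^+ r * p); last first.
    by rewrite [in RHS]exprMn expr1 mulr1 mulrAC.
  rewrite pp2 exprD exprM expr1 -mulrA ler_wpM2l ?exprn_ge0 //.
- rewrite [X in X <= _](_ : _ = (p ^+ 2 * (x * y)) ^+ r * (p ^+ 2 * y)); last first.
    by rewrite [in RHS]exprMn mulrACA.
  rewrite pp2 exprD exprM -mulrA ler_wpM2l ?exprn_ge0 //.
  have -> : p ^+ 2 * y = d ^+ 2 / x.
    by rewrite -pp2 (mulrC x y) mulrA mulfK // gt_eqF.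
  by [].
Qed.

Local Open Scope ring_scope.

Lemma le_sum1 (R : realType) (I : finType) (F : I -> R) i :
  (forall j, 0 <= F j) -> F i <= \sum_j F j.
Proof. by move=> h; rewrite (bigD1 i) //= lerDl sumr_ge0 // => j _; exact: h. Qed.

Lemma card_CT n1 n2 m b :
  #|{: CT n1 n2 m b}| = (n1 ^ a1 m b * n2 ^ a2 m b * (2 * (m.+1 * m.+1)))%N.
Proof. by rewrite /CT !card_prod !card_tuple !card_ord card_bool. Qed.

Lemma prob_bound (R : realType) (n1 n2 : nat) (d K : R) :
  (0 < n1)%N -> (n1 <= n2)%N -> 0 <= d -> d <= 1 ->
  (forall N, \sum_(m < N) (m.+1%:R) ^+ 2 * d ^+ m <= K) ->
  prob_Gnnp (d / Num.sqrt ((n1 * n2)%:R)) (@has_complex_component n1 n2)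
    <= 4 / n1%:R * K.
Proof.
move=> n1p n12 d0 d1 HK.
pose i0 : 'I_n1 := Ordinal n1p.
pose j0 : 'I_n2 := Ordinal (leq_trans n1p n12).
set p := d / _.
have s1 : 1 <= Num.sqrt ((n1 * n2)%:R : R).
  rewrite -[X in X <= _]sqrtr1 ler_sqrt ?ler0n // ler1n muln_gt0 n1p.
  exact: leq_trans n1p n12.
have p0 : 0 <= p by rewrite divr_ge0 ?sqrtr_ge0.
have p1 : p <= 1.
  rewrite ler_pdivrMr ?(lt_le_trans ltr01 s1) // mul1r.
  by apply: le_trans d1 _.
pose w (E : {set 'I_n1 * 'I_n2}) := p ^+ #|E| * (1 - p) ^+ (n1 * n2 - #|E|).
have w0 : forall E, 0 <= w E.
  by move=> E; rewrite mulr_ge0 ?exprn_ge0 // subr_ge0.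
pose f (m : 'I_(n1 + n2)) b (c : CT n1 n2 m b) (E : {set 'I_n1 * 'I_n2}) :=
  if (FsetC i0 j0 c \subset E) && (m.+2 <= #|FsetC i0 j0 c|)%N then w E else 0.
have f0 : forall m b c E, 0 <= f m b c E by move=> *; rewrite /f; case: ifP.
have step1 : prob_Gnnp p (@has_complex_component n1 n2) <=
    \sum_E \sum_(m : 'I_(n1 + n2)) \sum_(b : bool) \sum_(c : CT n1 n2 m b) f m b c E.
  rewrite /prob_Gnnp big_mkcond /=; apply: ler_sum => E _.
  case: ifP => cx; last by do 3 (apply: sumr_ge0 => ? _); exact: f0.
  have [m [b [c H]]] := cert_exists i0 j0 cx.
  apply: le_trans (le_sum1 m _); last by move=> m'; do 2 (apply: sumr_ge0 => ? _); exact: f0.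
  apply: le_trans (le_sum1 b _); last by move=> b'; do 1 (apply: sumr_ge0 => ? _); exact: f0.
  apply: le_trans (le_sum1 c _); last by [].
  by rewrite /f H.
apply: le_trans step1 _.
rewrite exchange_big /=.
apply: le_trans (_ : _ <= \sum_(m < n1 + n2) 4 / n1%:R * ((m.+1%:R) ^+ 2 * d ^+ m)) _;
  last first.
  by rewrite -mulr_sumr ler_wpM2l // divr_ge0 // ler0n.
apply: ler_sum => m _.
have inner : forall b (c : CT n1 n2 m b), \sum_E f m b c E <= p ^+ m.+2.
  move=> b c; rewrite /f.
  case: (boolP (m.+2 <= #|FsetC i0 j0 c|)%N) => hk; last first.
    by rewrite big1 ?exprn_ge0 // => E _; rewrite andbF.
  under eq_bigr do rewrite andbT.
  have PS := prob_sup p (FsetC i0 j0 c); rewrite card_prod !card_ord in PS.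
  by rewrite -big_mkcond /= PS ler_wiXn2l.
have key : forall b, \sum_E \sum_(c : CT n1 n2 m b) f m b c E <=
    2 / n1%:R * ((m.+1%:R) ^+ 2 * d ^+ m).
  move=> b; rewrite exchange_big /=.
  apply: le_trans (_ : _ <= \sum_(c : CT n1 n2 m b) p ^+ m.+2) _.
    by apply: ler_sum => c _; exact: inner.
  rewrite sumr_const (_ : #|_| = (n1 ^ a1 m b * n2 ^ a2 m b * (2 * (m.+1 * m.+1)))%N); last exact: card_CT.
  rewrite -[X in X <= _]mulr_natr natrM mulrA.
  apply: le_trans; first exact: (ler_wpM2r (ler0n _ _) (term_bound m b n1p n12 d0)).
  have dm : d ^+ m.+2 <= d ^+ m by apply: (ler_wiXn2l d0 d1); rewrite leqW.
  set Z := (n1%:R)^-1 * (2 * (m.+1)%:R ^+ 2) : R.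
  have Z0 : 0 <= Z by rewrite mulr_ge0 ?invr_ge0 ?ler0n // mulr_ge0 // exprn_ge0.
  rewrite (_ : d ^+ m.+2 / n1%:R * (2 * (m.+1 * m.+1))%:R = d ^+ m.+2 * Z);
    last by rewrite /Z !natrM; ring.
  rewrite (_ : 2 / n1%:R * (m.+1%:R ^+ 2 * d ^+ m) = d ^+ m * Z); last by rewrite /Z; ring.
  exact: ler_wpM2r.
rewrite exchange_big big_bool /=.
apply: le_trans (lerD (key true) (key false)) _.
set X := (m.+1%:R ^+ 2 * d ^+ m).
by rewrite (_ : 2 / n1%:R * X + 2 / n1%:R * X = 4 / n1%:R * X) //; ring.
Qed.

Local Open Scope ring_scope.

Lemma prob_ge0 (R : realType) (n1 n2 : nat) (d : R) :
  (0 < n1)%N -> (n1 <= n2)%N -> 0 <= d -> d <= 1 ->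
  0 <= prob_Gnnp (d / Num.sqrt ((n1 * n2)%:R)) (@has_complex_component n1 n2).
Proof.
move=> n1p n12 d0 d1.
set p := d / _.
have s1 : 1 <= Num.sqrt ((n1 * n2)%:R : R).
  rewrite -[X in X <= _]sqrtr1 ler_sqrt ?ler0n // ler1n muln_gt0 n1p.
  exact: leq_trans n1p n12.
have p0 : 0 <= p by rewrite divr_ge0 ?sqrtr_ge0.
have p1 : p <= 1.
  rewrite ler_pdivrMr ?(lt_le_trans ltr01 s1) // mul1r.
  by apply: le_trans d1 _.
by rewrite /prob_Gnnp sumr_ge0 // => E _; rewrite mulr_ge0 ?exprn_ge0 // subr_ge0.
Qed.

Unset Implicit Arguments.
Local Open Scope classical_set_scope.
Local Open Scope ring_scope.

Theorem lemma3p1 (R : realType) (d : R) (n2 : nat -> nat) :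
  0 < d -> d < 1 -> (forall n1 : nat, (n1 <= n2 n1)%N) ->
  (fun n1 : nat =>
     prob_Gnnp (d / Num.sqrt ((n1 * n2 n1)%:R))
       (@has_complex_component n1 (n2 n1))) @ \oo --> (0 : R).
Proof.
move=> d0 d1 hn2.
have [K HK] : exists K : R, forall N, \sum_(m < N) (m.+1%:R) ^+ 2 * d ^+ m <= K.
  by eexists; exact: sum_poly_geo (ltW d0) d1.
rewrite -cvg_shiftS /=.
apply: (@squeeze_cvgr _ _ _ _ (fun _ => 0) (fun n => 4 * K * harmonic n)).
- apply: nearW => n /=.
  rewrite prob_ge0 ?(ltW d0) ?(ltW d1) //=.
  apply: le_trans (prob_bound (ltn0Sn n) (hn2 n.+1) (ltW d0) (ltW d1) HK) _.
  by rewrite mulrAC.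
- exact: cvg_cst.
- have := cvgMl_tmp (a := 4 * K) (@cvg_harmonic R); rewrite mulr0; apply; exact: filter_class.
Qed.
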